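(* Let $k\ge1$ be an integer, $\rho\ne0$ real, $0\le q<1$, and $z$ a complex number. Then, as formal power series in $t$, $$\frac{1}{(1+\rho t)^{z/\rho}}\,{\rm Lif}_{k,q}\!\left(\frac{\ln(1+\rho t)}{\rho}\right)=\sum_{n=0}^\infty c_{n,\rho,q}^{(k)}(z)\frac{t^n}{n!},$$ where $(1+\rho t)^{-z/\rho}=\exp\!\big(-\tfrac{z}{\rho}\ln(1+\rho t)\big)$.
   Context: For real $0\le q<1$ (with $0^0=1$), $[x]_q=\frac{1-q^x}{1-q}$. The $q$-polyfactorial function is ${\rm Lif}_{k,q}(w)=\sum_{n=0}^\infty\frac{w^n}{n!\,[n+1]_q^k}$. Jackson's $q$-integral: $\int_0^1 f(x)\,d_qx=(1-q)\sum_{j\ge0} f(q^j)q^j$; multiple integrals are iterated. $(x)_n=x(x-1)\cdots(x-n+1)$, $(x)_0=1$. The $q$-poly-Cauchy polynomials of the first kind with parameter $\rho$ are $c_{n,\rho,q}^{(k)}(z)=\rho^n\int_0^1\cdots\int_0^1\left(\frac{x_1\cdots x_k-z}{\rho}\right)_n d_qx_1\cdots d_qx_k$ ($k$-fold). *)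

(* Defs.v *)
From Stdlib Require Import Reals Arith ClassicalEpsilon List.
Open Scope R_scope.

Definition Cplx : Type := (R * R)%type.
Definition RtoC (r : R) : Cplx := (r, 0).
Definition C0 : Cplx := (0, 0).
Definition C1 : Cplx := (1, 0).
Definition Cadd (a b : Cplx) : Cplx := (fst a + fst b, snd a + snd b).
Definition Copp (a : Cplx) : Cplx := (- fst a, - snd a).
Definition Csub (a b : Cplx) : Cplx := Cadd a (Copp b).
Definition Cmul (a b : Cplx) : Cplx :=
  (fst a * fst b - snd a * snd b, fst a * snd b + snd a * fst b).
Definition Cscale (r : R) (a : Cplx) : Cplx := (r * fst a, r * snd a).

Fixpoint Csum (f : nat -> Cplx) (n : nat) : Cplx :=
  match n with O => C0 | S m => Cadd (Csum f m) (f m) end.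

Definition Cseries_sum (a : nat -> Cplx) (l : Cplx) : Prop :=
  infinite_sum (fun j => fst (a j)) (fst l) /\
  infinite_sum (fun j => snd (a j)) (snd l).

Definition qnum (q : R) (x : nat) : R := (1 - q ^ x) / (1 - q).

(* coefficient of w^n in Lif_{k,q}(w) *)
Definition lif_coef (k : nat) (q : R) (n : nat) : R :=
  / (INR (fact n) * (qnum q (S n)) ^ k).

(* int_0^1 f(x) d_q x = (1-q) * sum_{j>=0} f(q^j) q^j  (value chosen by
   epsilon; it is the sum whenever the series converges) *)
Definition jackson (q : R) (f : R -> Cplx) : Cplx :=
  Cscale (1 - q)
    (epsilon (inhabits C0)
       (fun l => Cseries_sum (fun j => Cscale (q ^ j) (f (q ^ j))) l)).

Fixpoint jackson_multi (q : R) (k : nat) (F : list R -> Cplx) : Cplx :=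
  match k with
  | O => F nil
  | S k' => jackson q (fun x => jackson_multi q k' (fun xs => F (x :: xs)))
  end.

Definition prodlist (xs : list R) : R := fold_right Rmult 1 xs.

Fixpoint Cfall (x : Cplx) (n : nat) : Cplx :=
  match n with O => C1 | S m => Cmul (Cfall x m) (Csub x (RtoC (INR m))) end.

Definition qpoly_cauchy (k : nat) (rho q : R) (z : Cplx) (n : nat) : Cplx :=
  Cscale (rho ^ n)
    (jackson_multi q k
       (fun xs => Cfall (Cscale (/ rho) (Csub (RtoC (prodlist xs)) z)) n)).

Definition FPS : Type := nat -> Cplx.

Definition fps_mul (a b : FPS) : FPS :=
  fun n => Csum (fun i => Cmul (a i) (b (n - i)%nat)) (S n).

Definition fps_one : FPS := fun n => match n with O => C1 | _ => C0 end.

Fixpoint fps_pow (g : FPS) (n : nat) : FPS :=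
  match n with O => fps_one | S m => fps_mul (fps_pow g m) g end.

(* composition f(g(t)) = sum_n a_n g(t)^n, for g with zero constant term *)
Definition fps_comp (a : nat -> Cplx) (g : FPS) : FPS :=
  fun N => Csum (fun n => Cmul (a n) (fps_pow g n N)) (S N).

Definition lnser (rho : R) : FPS :=
  fun m => match m with
           | O => C0
           | S m' => RtoC ((-1) ^ m' * rho ^ (S m') / INR (S m'))
           end.

Definition exp_coef (n : nat) : Cplx := RtoC (/ INR (fact n)).

Definition binom_neg (rho : R) (z : Cplx) : FPS :=
  fps_comp exp_coef (fun m => Cmul (Copp (Cscale (/ rho) z)) (lnser rho m)).

Definition lif_ln (k : nat) (q rho : R) : FPS :=
  fps_comp (fun n => RtoC (lif_coef k q n)) (fun m => Cscale (/ rho) (lnser rho m)).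

(* Main.v *)
Require Import Defs.
From Stdlib Require Import Reals Arith Lia Lra ClassicalEpsilon FunctionalExtensionality List.
Open Scope R_scope.

Lemma Cpair_eq0 (a b c d : R) : a = c -> b = d -> (a, b) = (c, d).
Proof. intros; subst; auto. Qed.
Lemma Cring : ring_theory Defs.C0 Defs.C1 Cadd Cmul Csub Copp (@eq Cplx).
Proof.
  constructor; intros; repeat match goal with p : Cplx |- _ => destruct p end;
  unfold Cadd, Cmul, Csub, Copp, Defs.C0, Defs.C1; simpl; apply Cpair_eq0; simpl; ring.
Qed.
Add Ring Cring : Cring.

Lemma Cpair_eq (a b c d : R) : a = c -> b = d -> (a, b) = (c, d).
Proof. intros; subst; auto. Qed.

Lemma Cscale_mul r a : Cscale r a = Cmul (RtoC r) a.
Proof. destruct a; unfold Cscale, Cmul, RtoC; simpl; apply Cpair_eq; ring. Qed.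
Lemma RtoC_add a b : RtoC (a + b) = Cadd (RtoC a) (RtoC b).
Proof. unfold RtoC, Cadd; simpl; apply Cpair_eq; ring. Qed.
Lemma RtoC_mul a b : RtoC (a * b) = Cmul (RtoC a) (RtoC b).
Proof. unfold RtoC, Cmul; simpl; apply Cpair_eq; ring. Qed.
Lemma RtoC_opp a : RtoC (- a) = Copp (RtoC a).
Proof. unfold RtoC, Copp; simpl; apply Cpair_eq; ring. Qed.
Lemma RtoC_sub a b : RtoC (a - b) = Csub (RtoC a) (RtoC b).
Proof. unfold RtoC, Csub, Cadd, Copp; simpl; apply Cpair_eq; ring. Qed.
Lemma RtoC_0 : RtoC 0 = Defs.C0. Proof. reflexivity. Qed.
Lemma RtoC_1 : RtoC 1 = Defs.C1. Proof. reflexivity. Qed.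

Fixpoint Cpow (c : Cplx) (n : nat) : Cplx :=
  match n with O => Defs.C1 | S m => Cmul c (Cpow c m) end.

Lemma RtoC_pow x m : RtoC (x ^ m) = Cpow (RtoC x) m.
Proof. induction m; simpl; [reflexivity|]. rewrite RtoC_mul, IHm; reflexivity. Qed.

Lemma Cpow_mul a b m : Cpow (Cmul a b) m = Cmul (Cpow a m) (Cpow b m).
Proof. induction m; simpl. ring. rewrite IHm; ring. Qed.

Lemma Csum_ext_lt f g n : (forall i, (i < n)%nat -> f i = g i) -> Csum f n = Csum g n.
Proof. induction n; intros H; simpl; auto. rewrite IHn, H; auto; intros; apply H; lia. Qed.
Lemma Csum_add f g n : Csum (fun i => Cadd (f i) (g i)) n = Cadd (Csum f n) (Csum g n).
Proof. induction n; simpl. unfold Defs.C0, Cadd; simpl; apply Cpair_eq; ring. rewrite IHn; ring. Qed.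
Lemma Csum_mul_l c f n : Csum (fun i => Cmul c (f i)) n = Cmul c (Csum f n).
Proof. induction n; simpl. ring. rewrite IHn; ring. Qed.
Lemma Csum_zero f n : (forall i, (i < n)%nat -> f i = Defs.C0) -> Csum f n = Defs.C0.
Proof. intros H. rewrite (Csum_ext_lt f (fun _ => Defs.C0)) by auto. clear H; induction n; simpl; auto. rewrite IHn; ring. Qed.
Lemma Csum_shift f n : Csum f (S n) = Cadd (f 0%nat) (Csum (fun i => f (S i)) n).
Proof. induction n; simpl. ring. simpl in IHn. rewrite IHn. ring. Qed.
Lemma Csum_swap (F : nat -> nat -> Cplx) N M :
  Csum (fun i => Csum (fun m => F i m) M) N = Csum (fun m => Csum (fun i => F i m) N) M.
Proof. induction N; simpl. symmetry; apply Csum_zero; auto. rewrite IHN, <- Csum_add. reflexivity. Qed.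
Lemma Csum_extend f N1 N2 : (N1 <= N2)%nat -> (forall m, (N1 <= m < N2)%nat -> f m = Defs.C0) ->
  Csum f N1 = Csum f N2.
Proof.
  intros H; induction H; intros Hz; auto.
  simpl. rewrite <- IHle by (intros; apply Hz; lia). rewrite Hz by lia. ring.
Qed.
Lemma Cadd0l x : Cadd Defs.C0 x = x. Proof. ring. Qed.
Lemma Cadd0r x : Cadd x Defs.C0 = x. Proof. ring. Qed.

Definition Dser (a : FPS) : FPS := fun n => Cmul (RtoC (INR (S n))) (a (S n)).

Lemma prod_rule a b n :
  Cmul (RtoC (INR (S n))) (fps_mul a b (S n)) = Cadd (fps_mul (Dser a) b n) (fps_mul a (Dser b) n).
Proof.
  unfold fps_mul. rewrite <- Csum_mul_l.
  rewrite (Csum_ext_lt _ (fun i => Cadd (Cmul (RtoC (INR i)) (Cmul (a i) (b (S n - i)%nat)))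
                                  (Cmul (a i) (Cmul (RtoC (INR (S n - i))) (b (S n - i)%nat))))).
  2:{ intros i Hi. replace (INR (S n)) with (INR i + INR (S n - i)).
      rewrite RtoC_add; ring. rewrite <- plus_INR. f_equal; lia. }
  rewrite Csum_add. f_equal.
  - rewrite Csum_shift. simpl INR at 1. rewrite RtoC_0.
    match goal with |- Cadd ?x _ = _ => replace x with Defs.C0 by ring end.
    rewrite Cadd0l. apply Csum_ext_lt. intros i Hi. unfold Dser. simpl (S n - S i)%nat. ring.
  - change (Csum ?f (S (S n))) with (Cadd (Csum f (S n)) (f (S n))).
    cbv beta. rewrite Nat.sub_diag. change (INR 0) with 0. rewrite RtoC_0.
    match goal with |- Cadd _ ?x = _ => replace x with Defs.C0 by ring end.
    rewrite Cadd0r. apply Csum_ext_lt. intros i Hi. unfold Dser.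
    replace (S n - i)%nat with (S (n - i)) by lia. reflexivity.
Qed.

Definition ode (rho : R) (y : Cplx) (h : FPS) : Prop :=
  forall n, Dser h n = Cmul (RtoC rho) (Cmul (Csub y (RtoC (INR n))) (h n)).

Lemma ode_mul rho a b h g : ode rho a h -> ode rho b g -> ode rho (Cadd a b) (fps_mul h g).
Proof.
  intros Hh Hg n. unfold Dser at 1. rewrite prod_rule. unfold fps_mul.
  rewrite <- Csum_add, <- !Csum_mul_l. apply Csum_ext_lt. intros i Hi.
  rewrite Hh, Hg. rewrite minus_INR by lia. rewrite RtoC_sub. ring.
Qed.

Definition ff (rho : R) (y : Cplx) (n : nat) : Cplx :=
  Cmul (RtoC (rho ^ n / INR (fact n))) (Cfall y n).

Lemma ff_ode rho y : ode rho y (ff rho y).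
Proof.
  intros n. unfold Dser, ff. simpl Cfall.
  assert (E : INR (S n) * (rho ^ S n / INR (fact (S n))) = rho * (rho ^ n / INR (fact n))).
  { rewrite fact_simpl, mult_INR. simpl pow. field. split. apply INR_fact_neq_0. apply not_0_INR; lia. }
  transitivity (Cmul (RtoC (INR (S n) * (rho ^ S n / INR (fact (S n))))) (Cmul (Cfall y n) (Csub y (RtoC (INR n))))).
  rewrite RtoC_mul; ring. rewrite E, RtoC_mul. ring.
Qed.

Lemma ode_unique rho y h : ode rho y h -> h O = Defs.C1 -> forall n, h n = ff rho y n.
Proof.
  intros Hh H0 n. induction n.
  - rewrite H0. unfold ff. simpl. unfold RtoC, Cmul, Defs.C1; simpl; apply Cpair_eq; field.
  - assert (K : forall g, Cmul (RtoC (/ INR (S n))) (Dser g n) = g (S n)).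
    { intros g. unfold Dser. transitivity (Cmul (RtoC (/ INR (S n) * INR (S n))) (g (S n))).
      rewrite RtoC_mul; ring. rewrite Rinv_l by (apply not_0_INR; lia). rewrite RtoC_1. ring. }
    rewrite <- K, <- (K (ff rho y)), Hh, ff_ode, IHn. reflexivity.
Qed.

Lemma vandermonde rho a b n :
  ff rho (Cadd a b) n = fps_mul (ff rho a) (ff rho b) n.
Proof.
  symmetry. apply ode_unique. apply ode_mul; apply ff_ode.
  unfold fps_mul, ff; simpl. unfold RtoC, Cmul, Cadd, Defs.C1, Defs.C0; simpl; apply Cpair_eq; field.
Qed.

Definition P (rho : R) (m : nat) : FPS := fps_pow (lnser rho) m.
Definition delta (rho : R) (j : nat) : Cplx := match j with O => RtoC rho | S _ => Defs.C0 end.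

Lemma L_rel (rho : R) j : Dser (lnser rho) j = Cadd (Cmul (RtoC (- rho * INR j)) (lnser rho j)) (delta rho j).
Proof.
  unfold Dser. destruct j as [|j].
  - simpl lnser. simpl delta. rewrite <- RtoC_mul. unfold Defs.C0, RtoC, Cmul, Cadd; simpl; apply Cpair_eq; simpl; unfold Rdiv; rewrite ?Rinv_1; ring.
  - simpl lnser at 1. unfold lnser. simpl delta. rewrite <- !RtoC_mul, Cadd0r. f_equal.
    change (match j with O => 1 | S _ => INR j + 1 end) with (INR (S j)). rewrite !S_INR. cbn [pow]. field. pose proof (pos_INR j); lra.
Qed.

Lemma delta_sum (rho : R) f n : Csum (fun i => Cmul (f i) (delta rho (n - i))) (S n) = Cmul (f n) (RtoC rho).
Proof.
  simpl Csum at 1. rewrite Nat.sub_diag. rewrite Csum_zero. simpl; ring.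
  intros i Hi. replace (n - i)%nat with (S (n - i - 1)) by lia. simpl. ring.
Qed.

Lemma P_low (rho : R) m j : (j < m)%nat -> P rho m j = Defs.C0.
Proof.
  revert j; induction m; intros j Hj. lia.
  unfold P; simpl; fold (P rho m). unfold fps_mul. apply Csum_zero. intros i Hi.
  destruct (Nat.lt_ge_cases i m). rewrite IHm by lia. ring.
  replace (j - i)%nat with O by lia. simpl. ring.
Qed.

Lemma P_rec (rho : R) m n : Dser (P rho m) n =
  Cadd (Cmul (RtoC (- rho * INR n)) (P rho m n)) (Cmul (RtoC (INR m * rho)) (P rho (pred m) n)).
Proof.
  revert n; induction m; intros n.
  - unfold P, Dser; simpl. destruct n; simpl; unfold RtoC, Cmul, Cadd, Defs.C0, Defs.C1; simpl; apply Cpair_eq; ring.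
  - unfold Dser at 1. unfold P at 1. simpl fps_pow. rewrite prod_rule. fold (P rho m).
    assert (Hm : Cmul (RtoC (INR m * rho)) (fps_mul (P rho (pred m)) (lnser rho) n) = Cmul (RtoC (INR m * rho)) (P rho m n)).
    { destruct m. simpl INR. rewrite Rmult_0_l, RtoC_0. ring. reflexivity. }
    simpl pred. unfold fps_mul in *. rewrite <- Csum_add.
    set (L := lnser rho) in *.
    transitivity (Csum (fun i => Cadd (Cadd (Cmul (RtoC (- rho * INR n)) (Cmul (P rho m i) (L (n - i)%nat)))
        (Cmul (RtoC (INR m * rho)) (Cmul (P rho (pred m) i) (L (n - i)%nat)))) (Cmul (P rho m i) (delta rho (n - i)))) (S n)).
    { apply Csum_ext_lt. intros i Hi. rewrite IHm. unfold L; rewrite L_rel.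
      rewrite minus_INR by lia. rewrite !RtoC_mul, !RtoC_opp, !RtoC_sub. ring. }
    rewrite !Csum_add, !Csum_mul_l, delta_sum, Hm. rewrite S_INR, !RtoC_mul, RtoC_add, RtoC_1. change (P rho (S m) n) with (fps_mul (P rho m) L n); unfold fps_mul. ring.
Qed.

Definition Eterm rho y n m := Cmul (RtoC (/ INR (fact m))) (Cmul (Cpow y m) (P rho m n)).
Definition Ec rho y n := Csum (Eterm rho y n) (S n).

Lemma Ec_ext rho y n N : (S n <= N)%nat -> Ec rho y n = Csum (Eterm rho y n) N.
Proof.
  intros H. apply Csum_extend; auto. intros m Hm. unfold Eterm. rewrite P_low by lia. ring.
Qed.

Lemma Ec_ode rho y : ode rho y (Ec rho y).
Proof.
  intros n. unfold Dser. unfold Ec at 1. rewrite <- Csum_mul_l.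
  transitivity (Csum (fun m => Cadd (Cmul (RtoC (- rho * INR n)) (Eterm rho y n m))
       (Cmul (RtoC rho) (Cmul (RtoC (INR m / INR (fact m))) (Cmul (Cpow y m) (P rho (pred m) n))))) (S (S n))).
  { apply Csum_ext_lt. intros m Hm. unfold Eterm.
    transitivity (Cmul (RtoC (/ INR (fact m))) (Cmul (Cpow y m) (Dser (P rho m) n))).
    unfold Dser; ring. rewrite P_rec. unfold Rdiv. rewrite !RtoC_mul. ring. }
  rewrite Csum_add, Csum_mul_l, <- Ec_ext by lia.
  rewrite Csum_shift. simpl INR at 1. unfold Rdiv. rewrite Rmult_0_l, RtoC_0.
  rewrite (Csum_ext_lt _ (fun m => Cmul (RtoC rho) (Cmul y (Eterm rho y n m)))).
  2:{ intros m Hm. unfold Eterm. simpl pred. simpl Cpow.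
      replace (INR (S m) * / INR (fact (S m))) with (/ INR (fact m)).
      ring. rewrite fact_simpl, mult_INR. field. split. apply INR_fact_neq_0. apply not_0_INR; lia. }
  rewrite !Csum_mul_l. fold (Ec rho y n). rewrite RtoC_mul, RtoC_opp. unfold Csub. ring.
Qed.

Lemma Ec_ff rho y n : Ec rho y n = ff rho y n.
Proof.
  apply ode_unique. apply Ec_ode.
  unfold Ec, Eterm, P; simpl. unfold RtoC, Cmul, Cadd, Defs.C1, Defs.C0; simpl; apply Cpair_eq; field.
Qed.

Lemma isum_ext f g l : (forall j, f j = g j) -> infinite_sum f l -> infinite_sum g l.
Proof.
  intros H Hf eps He. destruct (Hf eps He) as [N HN]. exists N. intros n Hn.
  rewrite <- (sum_eq f g) by auto. auto.
Qed.

Lemma isum_plus f g l1 l2 : infinite_sum f l1 -> infinite_sum g l2 ->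
  infinite_sum (fun j => f j + g j) (l1 + l2).
Proof.
  intros Hf Hg. apply (isum_ext (fun j => f j + g j)); auto.
  intros eps He. destruct (CV_plus _ _ _ _ Hf Hg eps He) as [N HN]. exists N.
  intros n Hn. rewrite sum_plus. apply HN; auto.
Qed.

Lemma isum_zero : infinite_sum (fun _ => 0) 0.
Proof.
  intros eps He. exists O. intros n _. replace (sum_f_R0 (fun _ => 0) n) with 0.
  unfold Rdist. rewrite Rminus_0_r, Rabs_R0; auto.
  induction n; simpl; auto. rewrite <- IHn; ring.
Qed.

Lemma isum_geom c x : 0 <= x < 1 -> infinite_sum (fun j => c * x ^ j) (c * / (1 - x)).
Proof.
  intros Hx. assert (G := GP_infinite x). unfold Pser in G.
  assert (G' : infinite_sum (fun n => 1 * x ^ n) (/ (1 - x))) by (apply G; rewrite Rabs_pos_eq; lra).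
  intros eps He. assert (Hc : 0 < Rabs c + 1) by (pose proof (Rabs_pos c); lra).
  destruct (G' (eps / (Rabs c + 1))) as [N HN]. apply Rdiv_lt_0_compat; lra.
  exists N. intros n Hn. specialize (HN n Hn). unfold Rdist in *.
  replace (sum_f_R0 (fun j => c * x ^ j) n) with (c * sum_f_R0 (fun i => 1 * x ^ i) n) by (rewrite scal_sum; apply sum_eq; intros; ring).
  rewrite <- Rmult_minus_distr_l, Rabs_mult.
  apply Rle_lt_trans with (Rabs c * (eps / (Rabs c + 1))).
  apply Rmult_le_compat_l. apply Rabs_pos. lra.
  apply Rle_lt_trans with ((Rabs c) / (Rabs c + 1) * eps). right; field; lra.
  rewrite <- (Rmult_1_l eps) at 2. apply Rmult_lt_compat_r; auto.
  apply Rmult_lt_reg_r with (Rabs c + 1); auto. unfold Rdiv. rewrite Rmult_assoc, Rinv_l; lra.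
Qed.

Lemma pow_lt1 q m : 0 <= q < 1 -> 0 <= q ^ S m < 1.
Proof.
  intros Hq. induction m. simpl; lra. change (q ^ S (S m)) with (q * q ^ S m). split.
  apply Rmult_le_pos; lra. nra.
Qed.

Lemma Csum_S f n : Csum f (S n) = Cadd (Csum f n) (f n).
Proof. reflexivity. Qed.

Definition Cpoly (a : nat -> Cplx) (M : nat) (x : R) : Cplx :=
  Csum (fun m => Cmul (a m) (RtoC (x ^ m))) M.

Lemma series_poly (pi : Cplx -> R)
  (Hadd : forall u v, pi (Cadd u v) = pi u + pi v)
  (Hmul : forall u r, pi (Cmul u (RtoC r)) = pi u * r)
  (H0 : pi Defs.C0 = 0) (Hsc : forall r u, pi (Cscale r u) = r * pi u)
  q b M : 0 <= q < 1 ->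
  infinite_sum (fun j => pi (Cscale (q ^ j) (Cpoly b M (q ^ j))))
    (pi (Csum (fun m => Cmul (b m) (RtoC (/ (1 - q ^ S m)))) M)).
Proof.
  intros Hq. induction M.
  - change (Csum _ 0) with Defs.C0. rewrite H0. apply (isum_ext (fun _ => 0)). 2: apply isum_zero. intros j. unfold Cpoly. change (Csum _ 0) with Defs.C0. rewrite Hsc, H0; ring.
  - rewrite Csum_S. rewrite Hadd, Hmul.
    apply (isum_ext (fun j => pi (Cscale (q ^ j) (Cpoly b M (q ^ j))) + pi (b M) * (q ^ S M) ^ j)).
    + intros j. unfold Cpoly. rewrite Csum_S. rewrite !Hsc, Hadd, Hmul.
      rewrite <- !pow_mult. replace (S M * j)%nat with (j + j * M)%nat by lia. rewrite pow_add, pow_mult. ring.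
    + apply isum_plus; auto. apply isum_geom. apply pow_lt1; auto.
Qed.

Lemma qnum_nz q m : 0 <= q < 1 -> qnum q (S m) <> 0.
Proof.
  intros Hq. unfold qnum. pose proof (pow_lt1 q m Hq). unfold Rdiv. apply Rmult_integral_contrapositive_currified. lra. apply Rinv_neq_0_compat; lra.
Qed.

Lemma jackson_poly q b M : 0 <= q < 1 ->
  jackson q (Cpoly b M) = Csum (fun m => Cmul (b m) (RtoC (/ qnum q (S m)))) M.
Proof.
  intros Hq. unfold jackson.
  set (l := Csum (fun m => Cmul (b m) (RtoC (/ (1 - q ^ S m)))) M).
  assert (Hl : Cseries_sum (fun j => Cscale (q ^ j) (Cpoly b M (q ^ j))) l).
  { split; apply series_poly; auto; intros; destruct u; try destruct v; simpl; ring. }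
  assert (He := epsilon_spec (inhabits Defs.C0) _ (ex_intro _ l Hl)).
  set (e := epsilon _ _) in *.
  assert (Ee : e = l).
  { destruct He as [H1 H2]. destruct Hl as [G1 G2].
    destruct e, l. simpl in *. f_equal; eapply uniqueness_sum; eauto. }
  rewrite Ee. unfold l. rewrite Cscale_mul, <- Csum_mul_l. apply Csum_ext_lt. intros m _.
  transitivity (Cmul (b m) (RtoC ((1 - q) * / (1 - q ^ S m)))). rewrite RtoC_mul; ring.
  f_equal. f_equal. unfold qnum. pose proof (pow_lt1 q m Hq). field. lra.
Qed.

Lemma jm_poly q k : 0 <= q < 1 -> forall b M F, (forall xs, F xs = Cpoly b M (prodlist xs)) ->
  jackson_multi q k F = Csum (fun m => Cmul (b m) (RtoC (/ qnum q (S m) ^ k))) M.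
Proof.
  intros Hq. induction k; intros b M F HF.
  - simpl. rewrite HF. unfold Cpoly. apply Csum_ext_lt. intros m _. simpl. rewrite pow1, Rinv_1. reflexivity.
  - simpl. replace (fun x => jackson_multi q k (fun xs => F (cons x xs)))
      with (Cpoly (fun m => Cmul (b m) (RtoC (/ qnum q (S m) ^ k))) M).
    + rewrite jackson_poly by auto. apply Csum_ext_lt. intros m _.
      rewrite Rinv_mult, <- Rmult_comm, RtoC_mul. ring.
    + apply functional_extensionality. intros x. symmetry.
      rewrite (IHk (fun m => Cmul (b m) (RtoC (x ^ m))) M).
      * unfold Cpoly. apply Csum_ext_lt. intros m _. ring.
      * intros xs. rewrite HF. unfold Cpoly. apply Csum_ext_lt. intros m _. simpl prodlist.
        rewrite Rpow_mult_distr, RtoC_mul. ring.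
Qed.

Lemma pow_scale h c g : (forall i, h i = Cmul c (g i)) ->
  forall m n, fps_pow h m n = Cmul (Cpow c m) (fps_pow g m n).
Proof.
  intros H m. induction m; intros n.
  - simpl. ring.
  - simpl. unfold fps_mul. rewrite <- Csum_mul_l. apply Csum_ext_lt. intros i _.
    rewrite IHm, H. ring.
Qed.

Lemma Csum_mul_r c f n : Csum (fun i => Cmul (f i) c) n = Cmul (Csum f n) c.
Proof. rewrite <- (Cring.(Rmul_comm) c). rewrite <- Csum_mul_l. apply Csum_ext_lt; intros; ring. Qed.

Theorem theorem3 (k : nat) (rho q : R) (z : Cplx) :
  (1 <= k)%nat -> rho <> 0 -> 0 <= q < 1 ->
  forall n : nat,
    fps_mul (binom_neg rho z) (lif_ln k q rho) n
    = Cscale (/ INR (fact n)) (qpoly_cauchy k rho q z n).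
Proof.
  intros Hk Hr Hq n.
  set (y0 := Copp (Cscale (/ rho) z)).
  set (ir := RtoC (/ rho)).
  assert (HB : forall i, binom_neg rho z i = ff rho y0 i).
  { intros i. rewrite <- Ec_ff. unfold binom_neg, fps_comp, Ec. apply Csum_ext_lt. intros m _.
    unfold Eterm, P, exp_coef. rewrite (pow_scale _ y0 (lnser rho)) by reflexivity. reflexivity. }
  set (T := fun i m => Cmul (ff rho y0 i) (Cmul (RtoC (/ INR (fact m))) (Cmul (Cpow ir m) (P rho m (n - i)%nat)))).
  assert (HL : fps_mul (binom_neg rho z) (lif_ln k q rho) n =
     Csum (fun m => Csum (fun i => Cmul (T i m) (RtoC (/ qnum q (S m) ^ k))) (S n)) (S n)).
  { rewrite <- Csum_swap. unfold fps_mul. apply Csum_ext_lt. intros i Hi. rewrite HB.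
    unfold lif_ln, fps_comp. rewrite <- Csum_mul_l.
    rewrite (Csum_extend _ (S (n - i)%nat) (S n)) by (try lia; intros m Hm; rewrite (pow_scale _ ir (lnser rho)) by (intros; unfold ir; apply Cscale_mul); change (fps_pow (lnser rho) m (n - i)%nat) with (P rho m (n - i)%nat); rewrite P_low by lia; ring).
    apply Csum_ext_lt. intros m _. unfold T.
    rewrite (pow_scale _ ir (lnser rho)) by (intros; unfold ir; apply Cscale_mul).
    unfold lif_coef. rewrite Rinv_mult, RtoC_mul. fold (P rho m (n - i)%nat). ring. }
  rewrite HL. clear HL.
  set (K := INR (fact n) / rho ^ n).
  assert (HG : forall xs, Cfall (Cscale (/ rho) (Csub (RtoC (prodlist xs)) z)) n =
     Cpoly (fun m => Cmul (RtoC K) (Csum (fun i => T i m) (S n))) (S n) (prodlist xs)).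
  { intros xs. set (x := prodlist xs).
    assert (Hw : Cscale (/ rho) (Csub (RtoC x) z) = Cadd y0 (RtoC (/ rho * x))).
    { unfold y0. rewrite !Cscale_mul, RtoC_mul. unfold Csub. ring. }
    rewrite Hw.
    transitivity (Cmul (RtoC K) (ff rho (Cadd y0 (RtoC (/ rho * x))) n)).
    { unfold ff. transitivity (Cmul (RtoC (K * (rho ^ n / INR (fact n)))) (Cfall (Cadd y0 (RtoC (/ rho * x))) n)).
      replace (K * (rho ^ n / INR (fact n))) with 1. rewrite RtoC_1. ring.
      unfold K. field. repeat split; try apply pow_nonzero; try apply INR_fact_neq_0; auto.
      rewrite RtoC_mul. ring. }
    rewrite vandermonde. unfold fps_mul, Cpoly.
    rewrite (Csum_ext_lt (fun m => Cmul (Cmul (RtoC K) (Csum (fun i => T i m) (S n))) (RtoC (x ^ m)))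
                         (fun m => Csum (fun i => Cmul (RtoC K) (Cmul (T i m) (RtoC (x ^ m)))) (S n))).
    2:{ intros m _. rewrite Csum_mul_l, Csum_mul_r. ring. }
    rewrite <- Csum_swap, <- Csum_mul_l. apply Csum_ext_lt. intros i Hi.
    rewrite Csum_mul_l. f_equal.
    rewrite <- (Ec_ff rho (RtoC (/ rho * x)) (n - i)%nat), (Ec_ext rho _ (n - i)%nat (S n)) by lia. rewrite <- Csum_mul_l.
    apply Csum_ext_lt. intros m _. unfold T, Eterm, ir.
    rewrite <- !RtoC_pow, Rpow_mult_distr, RtoC_mul. ring. }
  unfold qpoly_cauchy.
  rewrite (jm_poly q k Hq _ (S n) _ HG).
  rewrite (Csum_ext_lt (fun m => Cmul (Cmul (RtoC K) (Csum (fun i => T i m) (S n))) (RtoC (/ qnum q (S m) ^ k))) (fun m => Cmul (RtoC K) (Csum (fun i => Cmul (T i m) (RtoC (/ qnum q (S m) ^ k))) (S n)))).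
  2:{ intros m _. rewrite Csum_mul_r. ring. }
  rewrite Csum_mul_l, !Cscale_mul.
  transitivity (Cmul (RtoC (/ INR (fact n) * (rho ^ n * K)))
    (Csum (fun m => Csum (fun i => Cmul (T i m) (RtoC (/ qnum q (S m) ^ k))) (S n)) (S n))).
  - replace (/ INR (fact n) * (rho ^ n * K)) with 1. rewrite RtoC_1. ring.
    unfold K. field. repeat split; try apply pow_nonzero; try apply INR_fact_neq_0; auto.
  - rewrite !RtoC_mul. ring.
Qed.
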